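(* Let $\mathcal H$ be a graded connected Hopf algebra over a field $\Bbbk$ and $\varphi,\psi\colon\mathcal H\to\Bbbk$ characters. Then: (a) $S(\varphi,\psi)=\{h\in\mathcal H : f(h)=0\ \text{for all } f\in I(\varphi,\psi)\}$; (b) $I(\varphi,\psi)$ is a graded Hopf ideal of $\mathcal H^*$; (c) $S(\varphi,\psi)$ is a graded Hopf subalgebra of $\mathcal H$; (d) a homogeneous element $h\in\mathcal H$ belongs to $S(\varphi,\psi)$ if and only if $\bigl(\mathrm{id}\otimes(\varphi-\psi)\otimes\mathrm{id}\bigr)\circ\Delta^{(2)}(h)=0$.
   Context: $\mathcal H=\bigoplus_{n\ge0}\mathcal H_n$ is graded connected ($\mathcal H_0=\Bbbk\cdot1$, graded structure maps) with each $\mathcal H_n$ finite-dimensional; $\Delta^{(2)}=(\Delta\otimes\mathrm{id})\circ\Delta$. $\mathcal H^*=\bigoplus_n(\mathcal H_n)^*$ is the graded dual Hopf algebra (product = convolution). For a linear functional $\varphi$, $\varphi_n=\varphi|_{\mathcal H_n}\in(\mathcal H_n)^*$. A character is an algebra morphism $\mathcal H\to\Bbbk$. $S(\varphi,\psi)$ denotes the largest graded subcoalgebra of $\mathcal H$ on which $\varphi(h)=\psi(h)$ for all $h$, and $I(\varphi,\psi)$ denotes the ideal of $\mathcal H^*$ generated by the elements $\varphi_n-\psi_n$, $n\ge0$. *)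

(* Defs.v *)
From HB Require Import structures.
From mathcomp Require Import all_boot all_order all_algebra.
From mathcomp Require Import finmap.
From mathcomp.multinomials Require Import monalg.

Set Implicit Arguments.
Unset Strict Implicit.
Unset Printing Implicit Defensive.

Import GRing.Theory.
Local Open Scope fset_scope.
Local Open Scope ring_scope.

Section Defs.
Variable K : fieldType.

(* {malg K[X]} = free K-vector space on the basis X; the free vector   *)
(* space on X * Y is the tensor product of those on X and on Y.        *)

Definition lift {X : choiceType} {W : lmodType K} (f : X -> W)
  (v : {malg K[X]}) : W := \sum_(x <- msupp v) v@_x *: f x.

Definition tens {X Y : choiceType} (u : {malg K[X]}) (w : {malg K[Y]})
  : {malg K[(X * Y)%type]} :=
  \sum_(x <- msupp u) \sum_(y <- msupp w) (u@_x * w@_y) *: << (x, y) >>.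

Definition tmap {X Y X' Y' : choiceType}
  (f : {malg K[X]} -> {malg K[X']}) (g : {malg K[Y]} -> {malg K[Y']})
  : {malg K[(X * Y)%type]} -> {malg K[(X' * Y')%type]} :=
  lift (fun p : X * Y => tens (f << p.1 >>) (g << p.2 >>)).

Definition assocr3 {X Y Z : choiceType}
  : {malg K[(X * (Y * Z))%type]} -> {malg K[((X * Y) * Z)%type]} :=
  lift (fun p : X * (Y * Z) => << ((p.1, p.2.1), p.2.2) >>).

(* evaluation of a linear functional, given by its values on the basis *)
Definition ev {X : choiceType} (f : X -> K) (v : {malg K[X]}) : K :=
  \sum_(x <- msupp v) v@_x * f x.

(* Structure data of a graded Hopf algebra H = {malg K[B]}, presented  *)
(* on a homogeneous basis B containing the unit 1.                     *)
Record hopf_data (B : choiceType) := HopfData {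
  deg : B -> nat;
  unitb : B;
  mulb : B -> B -> {malg K[B]};
  comulb : B -> {malg K[(B * B)%type]};
  counitb : B -> K;
  antipb : B -> {malg K[B]}
}.

Section Ops.
Variables (B : choiceType) (H : hopf_data B).

Definition hmul (u v : {malg K[B]}) : {malg K[B]} :=
  \sum_(a <- msupp u) \sum_(b <- msupp v) (u@_a * v@_b) *: mulb H a b.
Definition hone : {malg K[B]} := << unitb H >>.
Definition hcomul : {malg K[B]} -> {malg K[(B * B)%type]} := lift (comulb H).
Definition hcounit (v : {malg K[B]}) : K := ev (counitb H) v.
Definition hantip : {malg K[B]} -> {malg K[B]} := lift (antipb H).
Definition hmulT : {malg K[(B * B)%type]} -> {malg K[B]} :=
  lift (fun p : B * B => mulb H p.1 p.2).
Definition hmul2 (w w' : {malg K[(B * B)%type]}) : {malg K[(B * B)%type]} :=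
  \sum_(p <- msupp w) \sum_(q <- msupp w')
     (w@_p * w'@_q) *: tens (mulb H p.1 q.1) (mulb H p.2 q.2).
Definition counit_l : {malg K[(B * B)%type]} -> {malg K[B]} :=
  lift (fun p : B * B => counitb H p.1 *: << p.2 >>).
Definition counit_r : {malg K[(B * B)%type]} -> {malg K[B]} :=
  lift (fun p : B * B => counitb H p.2 *: << p.1 >>).

Definition homog (n : nat) (v : {malg K[B]}) : Prop :=
  forall b, b \in msupp v -> deg H b = n.
Definition hcomp (n : nat) (v : {malg K[B]}) : {malg K[B]} :=
  \sum_(b <- msupp v | deg H b == n) v@_b *: << b >>.

Definition graded_connected_hopf : Prop :=
  (forall n, exists s : seq B, forall b, deg H b = n -> b \in s) /\
  (deg H (unitb H) = 0%N /\ (forall b, deg H b = 0%N -> b = unitb H)) /\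
  [/\ forall a b c, c \in msupp (mulb H a b) -> deg H c = (deg H a + deg H b)%N,
      forall b p, p \in msupp (comulb H b) -> (deg H p.1 + deg H p.2)%N = deg H b,
      forall b, counitb H b != 0 -> deg H b = 0%N &
      forall b c, c \in msupp (antipb H b) -> deg H c = deg H b] /\
  ((forall u v w, hmul (hmul u v) w = hmul u (hmul v w)) /\
   (forall v, hmul hone v = v /\ hmul v hone = v)) /\
  ((forall v, tmap hcomul id (hcomul v) = assocr3 (tmap id hcomul (hcomul v))) /\
   (forall v, counit_l (hcomul v) = v /\ counit_r (hcomul v) = v)) /\
  [/\ forall u v, hcomul (hmul u v) = hmul2 (hcomul u) (hcomul v),
      hcomul hone = tens hone hone,
      forall u v, hcounit (hmul u v) = hcounit u * hcounit v &
      hcounit hone = 1] /\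
  (forall v, hmulT (tmap hantip id (hcomul v)) = hcounit v *: hone /\
             hmulT (tmap id hantip (hcomul v)) = hcounit v *: hone).

Definition character (phi : B -> K) : Prop :=
  (forall u v, ev phi (hmul u v) = ev phi u * ev phi v) /\ ev phi hone = 1.

Definition subspace (C : {malg K[B]} -> Prop) : Prop :=
  C 0 /\ forall (a : K) u v, C u -> C v -> C (a *: u + v).

Definition graded_subspace (C : {malg K[B]} -> Prop) : Prop :=
  subspace C /\ forall n v, C v -> C (hcomp n v).

Definition in_tens (C D : {malg K[B]} -> Prop) (w : {malg K[(B * B)%type]}) : Prop :=
  exists (m : nat) (c d : 'I_m -> {malg K[B]}),
    (forall i, C (c i) /\ D (d i)) /\ w = \sum_(i < m) tens (c i) (d i).

Definition subcoalgebra (C : {malg K[B]} -> Prop) : Prop :=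
  subspace C /\ forall v, C v -> in_tens C C (hcomul v).

Definition Sphipsi (phi psi : B -> K) (h : {malg K[B]}) : Prop :=
  exists C : {malg K[B]} -> Prop,
    [/\ graded_subspace C, subcoalgebra C,
        (forall x, C x -> ev phi x = ev psi x) & C h].

Definition graded_hopf_subalgebra (C : {malg K[B]} -> Prop) : Prop :=
  [/\ graded_subspace C, C hone, (forall u v, C u -> C v -> C (hmul u v)),
      subcoalgebra C & forall v, C v -> C (hantip v)].

(* elements of H^* = linear functionals (values on the basis) vanishing
   on all but finitely many H_n *)
Definition in_dual (f : B -> K) : Prop :=
  exists N, forall b, (N <= deg H b)%N -> f b = 0.

Definition dcomp (n : nat) (f : B -> K) : B -> K :=
  fun b => if deg H b == n then f b else 0.

Definition conv (f g : B -> K) : B -> K :=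
  fun b => ev (fun p : B * B => f p.1 * g p.2) (comulb H b).

(* coproduct of H^*, valued in H^* (x) H^* = graded dual of H (x) H *)
Definition dcomul (f : B -> K) : B * B -> K :=
  fun p => ev f (mulb H p.1 p.2).
Definition dcounit (f : B -> K) : K := f (unitb H).
Definition dantip (f : B -> K) : B -> K := fun b => ev f (antipb H b).

Definition dsubspace (J : (B -> K) -> Prop) : Prop :=
  J (fun _ => 0) /\
  forall (a : K) f g, J f -> J g -> J (fun b => a * f b + g b).

Definition graded_hopf_ideal (J : (B -> K) -> Prop) : Prop :=
  (forall f, J f -> in_dual f) /\ dsubspace J /\
  (forall f g, in_dual g -> J f -> J (conv f g) /\ J (conv g f)) /\
  (forall n f, J f -> J (dcomp n f)) /\
  (* coideal: Delta(J) in J (x) H^* + H^* (x) J *)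
  (forall f, J f ->
     exists (m : nat) (a c : 'I_m -> B -> K),
       (forall i, [/\ in_dual (a i), in_dual (c i) & J (a i) \/ J (c i)]) /\
       forall p, dcomul f p = \sum_(i < m) a i p.1 * c i p.2) /\
  (forall f, J f -> dcounit f = 0) /\
  (forall f, J f -> J (dantip f)).

Definition Iphipsi (phi psi : B -> K) (f : B -> K) : Prop :=
  exists (m : nat) (a c : 'I_m -> B -> K) (k : 'I_m -> nat),
    (forall i, in_dual (a i) /\ in_dual (c i)) /\
    forall b, f b = \sum_(i < m)
       conv (conv (a i) (dcomp (k i) (fun x => phi x - psi x))) (c i) b.

Definition comul2 (h : {malg K[B]}) : {malg K[((B * B) * B)%type]} :=
  tmap hcomul id (hcomul h).

Definition mid_map (chi : B -> K) : {malg K[((B * B) * B)%type]} -> {malg K[(B * B)%type]} :=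
  lift (fun p : (B * B) * B => chi p.1.2 *: << (p.1.1, p.2) >>).

End Ops.
End Defs.

(* Main.v *)
Require Import Defs.
From HB Require Import structures.
From mathcomp Require Import all_boot all_order all_algebra.
From mathcomp Require Import finmap.
From mathcomp.multinomials Require Import monalg.
From Stdlib Require Import Classical FunctionalExtensionality PropExtensionality.
From mathcomp Require Import ring zify.
From Stdlib Require Import Lia.
Set Implicit Arguments.
Unset Strict Implicit.
Unset Printing Implicit Defensive.
Import GRing.Theory.
Local Open Scope fset_scope.
Local Open Scope ring_scope.

Notation dlift := Defs.lift.
Notation fext := functional_extensionality.

Section Lin.
Variable K : fieldType.

Lemma evEw (X : choiceType) (f : X -> K) (v : {malg K[X]}) (d : {fset X}) :
  msupp v `<=` d -> ev f v = \sum_(x <- d) v@_x * f x.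
Proof.
move=> sub; rewrite /ev; apply: big_fset_incl => // x _ xn.
by rewrite mcoeff_outdom // mul0r.
Qed.

Lemma ev_lin (X : choiceType) (f : X -> K) a (u v : {malg K[X]}) :
  ev f (a *: u + v) = a * ev f u + ev f v.
Proof.
set d := msupp u `|` msupp v.
have su : msupp u `<=` d by apply: fsubsetUl.
have sv : msupp v `<=` d by apply: fsubsetUr.
have sw : msupp (a *: u + v) `<=` d.
  apply: fsubset_trans (msuppD_le _ _) _; apply: fsetUSS => //.
  exact: msuppZ_le.
rewrite (evEw _ sw) (evEw _ su) (evEw _ sv) big_distrr -big_split /=.
apply: eq_bigr => x _; rewrite mcoeffD mcoeffZ; ring.
Qed.

Lemma ev0 (X : choiceType) (f : X -> K) : ev f 0 = 0.
Proof. by rewrite /ev msupp0 big_seq_fset0. Qed.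

Lemma evD (X : choiceType) (f : X -> K) (u v : {malg K[X]}) :
  ev f (u + v) = ev f u + ev f v.
Proof. by have := ev_lin f 1 u v; rewrite scale1r mul1r. Qed.

Lemma evZ (X : choiceType) (f : X -> K) a (u : {malg K[X]}) :
  ev f (a *: u) = a * ev f u.
Proof. by have := ev_lin f a u 0; rewrite addr0 ev0 addr0. Qed.

Lemma evN (X : choiceType) (f : X -> K) (u : {malg K[X]}) :
  ev f (- u) = - ev f u.
Proof. by rewrite -scaleN1r evZ mulN1r. Qed.

Lemma evB (X : choiceType) (f : X -> K) (u v : {malg K[X]}) :
  ev f (u - v) = ev f u - ev f v.
Proof. by rewrite evD evN. Qed.

Lemma ev_sum (X : choiceType) (f : X -> K) (I : Type) (r : seq I) (P : pred I)
  (F : I -> {malg K[X]}) :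
  ev f (\sum_(i <- r | P i) F i) = \sum_(i <- r | P i) ev f (F i).
Proof. by apply: (big_morph (ev f)); [apply: evD | apply: ev0]. Qed.

Lemma evU (X : choiceType) (f : X -> K) a (x : X) : ev f << a *g x >> = a * f x.
Proof.
rewrite (@evEw _ _ _ [fset x]) ?msuppU_le // big_seq_fset1 mcoeffUU //.
Qed.

Lemma evU1 (X : choiceType) (f : X -> K) (x : X) : ev f << x >> = f x.
Proof. by rewrite evU mul1r. Qed.

Lemma ev_fext (X : choiceType) (f g : X -> K) (v : {malg K[X]}) :
  (forall x, x \in msupp v -> f x = g x) -> ev f v = ev g v.
Proof.
move=> e; rewrite /ev big_seq_cond [RHS]big_seq_cond; apply: eq_bigr => x.
by rewrite andbT => /e ->.
Qed.

Lemma ev_flin (X : choiceType) (f g : X -> K) a (v : {malg K[X]}) :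
  ev (fun x => a * f x + g x) v = a * ev f v + ev g v.
Proof.
rewrite /ev big_distrr -big_split /=; apply: eq_bigr => x _; ring.
Qed.

Lemma ev_fscale (X : choiceType) (f : X -> K) a (v : {malg K[X]}) :
  ev (fun x => f x * a) v = ev f v * a.
Proof. by rewrite /ev big_distrl /=; apply: eq_bigr => x _; rewrite mulrA. Qed.

Lemma ev_fscalel (X : choiceType) (f : X -> K) a (v : {malg K[X]}) :
  ev (fun x => a * f x) v = a * ev f v.
Proof. by rewrite /ev big_distrr /=; apply: eq_bigr => x _; ring. Qed.

Lemma ev_fsum (X : choiceType) (I : Type) (r : seq I) (P : pred I)
  (F : I -> X -> K) (v : {malg K[X]}) :
  ev (fun x => \sum_(i <- r | P i) F i x) v = \sum_(i <- r | P i) ev (F i) v.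
Proof.
rewrite /ev exchange_big /=; apply: eq_bigr => x _; rewrite big_distrr //.
Qed.

Lemma ev_f0 (X : choiceType) (v : {malg K[X]}) : ev (fun _ : X => 0) v = 0.
Proof. by rewrite /ev big1 // => x _; rewrite mulr0. Qed.

Lemma ev_fsub (X : choiceType) (f g : X -> K) (v : {malg K[X]}) :
  ev (fun x => f x - g x) v = ev f v - ev g v.
Proof. by rewrite /ev -sumrB; apply: eq_bigr => x _; rewrite mulrBr. Qed.

Definition delta (X : choiceType) (x : X) : X -> K := fun y => (y == x)%:R.

Lemma ev_delta (X : choiceType) (x : X) (v : {malg K[X]}) : ev (delta x) v = v@_x.
Proof.
rewrite /ev /delta.
have [xi|xn] := boolP (x \in msupp v).
  rewrite (big_fsetD1 x) //= eqxx mulr1 big1_fset ?addr0 // => y.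
  by rewrite in_fsetD1 => /andP[/negbTE ->]; rewrite mulr0.
rewrite (mcoeff_outdom xn) big1_fset // => y yi _.
by case: eqP => [e|]; [subst y; rewrite (negbTE xn) in yi | rewrite mulr0].
Qed.

Lemma malg_ext (X : choiceType) (u v : {malg K[X]}) :
  (forall f, ev f u = ev f v) -> u = v.
Proof. by move=> e; apply/malgP => x; rewrite -!ev_delta e. Qed.

Lemma ev_neq0 (X : choiceType) (f : X -> K) (v : {malg K[X]}) :
  ev f v != 0 -> exists2 x, x \in msupp v & f x != 0.
Proof.
move=> nz; apply: NNPP => hn; move: nz; rewrite (@ev_fext _ f (fun _ => 0)).
  by rewrite ev_f0 eqxx.
move=> x xi; apply: NNPP => fx; apply: hn; exists x => //; exact/eqP.
Qed.

Lemma ev_lift (X Y : choiceType) (f : Y -> K) (g : X -> {malg K[Y]}) v :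
  ev f (dlift g v) = ev (fun x => ev f (g x)) v.
Proof. by rewrite /dlift /Defs.lift ev_sum [RHS]/ev; apply: eq_bigr => x _; rewrite evZ. Qed.

Lemma ev_tens (X Y : choiceType) (F : X * Y -> K) (u : {malg K[X]}) (w : {malg K[Y]}) :
  ev F (tens u w) = ev (fun x => ev (fun y => F (x, y)) w) u.
Proof.
rewrite /tens ev_sum [RHS]/ev; apply: eq_bigr => x _; rewrite ev_sum.
under eq_bigr do rewrite evZ evU1.
rewrite [in RHS]/ev big_distrr; by apply: eq_bigr => y _; rewrite /= mulrA.
Qed.

Lemma ev_tens_prod (X Y : choiceType) (f : X -> K) (g : Y -> K) u w :
  ev (fun p : X * Y => f p.1 * g p.2) (tens u w) = ev f u * ev g w.
Proof.
rewrite ev_tens /= -ev_fscale; congr ev.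
by apply: functional_extensionality => x; rewrite ev_fscalel.
Qed.

Lemma liftU (X Y : choiceType) (g : X -> {malg K[Y]}) x : dlift g << x >> = g x.
Proof. by apply: malg_ext => f; rewrite ev_lift evU1. Qed.

Lemma lift_lin (X Y : choiceType) (g : X -> {malg K[Y]}) a u v :
  dlift g (a *: u + v) = a *: dlift g u + dlift g v.
Proof. by apply: malg_ext => f; rewrite ev_lin !ev_lift ev_lin. Qed.

Lemma mcoeff_tens (X Y : choiceType) (u : {malg K[X]}) (w : {malg K[Y]}) x y :
  (tens u w)@_(x, y) = u@_x * w@_y.
Proof.
rewrite -ev_delta ev_tens /delta.
have -> : (fun x' => ev (fun y' => ((x', y') == (x, y))%:R) w) =
          (fun x' => (x' == x)%:R * w@_y).
  apply: functional_extensionality => x'; rewrite -ev_delta -ev_fscalel /delta.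
  congr ev; apply: functional_extensionality => y'; rewrite xpair_eqE.
by case: (x' == x); case: (y' == y); rewrite /= ?mul1r ?mul0r.
by rewrite ev_fscale ev_delta.
Qed.

Lemma msupp_tens (X Y : choiceType) (u : {malg K[X]}) (w : {malg K[Y]}) p :
  p \in msupp (tens u w) -> p.1 \in msupp u /\ p.2 \in msupp w.
Proof.
case: p => x y; rewrite -mcoeff_neq0 mcoeff_tens mulf_eq0 negb_or.
by rewrite !mcoeff_neq0 => /andP.
Qed.

Lemma msupp_lift (X Y : choiceType) (g : X -> {malg K[Y]}) v y :
  y \in msupp (dlift g v) -> exists2 x, x \in msupp v & y \in msupp (g x).
Proof.
rewrite -mcoeff_neq0 -ev_delta ev_lift => /ev_neq0 [x xi].
by rewrite ev_delta mcoeff_neq0; exists x.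
Qed.

Lemma ev_fadd (X : choiceType) (f g : X -> K) (v : {malg K[X]}) :
  ev (fun x => f x + g x) v = ev f v + ev g v.
Proof. by rewrite -[ev f v]mul1r -ev_flin; congr ev; apply: functional_extensionality => x; rewrite mul1r. Qed.

Lemma msupp1 (X : choiceType) (x : X) : msupp (<< x >> : {malg K[X]}) = [fset x].
Proof. by rewrite msuppU oner_eq0. Qed.

Lemma tensU (X Y : choiceType) (x : X) (y : Y) :
  tens (<< x >> : {malg K[X]}) (<< y >> : {malg K[Y]}) = << (x, y) >>.
Proof. by apply: malg_ext => f; rewrite ev_tens !evU1. Qed.

Lemma ev_swap (X Y : choiceType) (F : X -> Y -> K) (u : {malg K[X]}) (v : {malg K[Y]}) :
  ev (fun x => ev (fun y => F x y) v) u = ev (fun y => ev (fun x => F x y) u) v.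
Proof.
rewrite /ev; under eq_bigr do rewrite big_distrr.
rewrite exchange_big /=; apply: eq_bigr => y _; rewrite big_distrr /=.
by apply: eq_bigr => x _; rewrite /=; ring.
Qed.

Lemma lift_sum (X Y : choiceType) (g : X -> {malg K[Y]}) (I : Type) (r : seq I)
  (F : I -> {malg K[X]}) :
  dlift g (\sum_(i <- r) F i) = \sum_(i <- r) dlift g (F i).
Proof. by apply: malg_ext => f; rewrite ev_lift !ev_sum; apply: eq_bigr => i _; rewrite ev_lift. Qed.
End Lin.


Fixpoint allp (T : Type) (P : T -> Prop) (s : seq T) : Prop :=
  if s is x :: s' then P x /\ allp P s' else True.

Lemma allp_cat T (P : T -> Prop) s1 s2 : allp P s1 -> allp P s2 -> allp P (s1 ++ s2).
Proof. by elim: s1 => //= x s IH [Px Hs] H2; split => //; apply: IH. Qed.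

Lemma allp_map T U (P : U -> Prop) (F : T -> U) s :
  (forall x, P (F x)) -> allp P (map F s).
Proof. by move=> h; elim: s => //= x s ->. Qed.

Lemma allp_mapP T U (P : U -> Prop) (Q : T -> Prop) (F : T -> U) s :
  (forall x, Q x -> P (F x)) -> allp Q s -> allp P (map F s).
Proof. by move=> h; elim: s => //= x s IH [/h ? /IH]; split. Qed.

Lemma allp_allpairs T1 T2 U (P : T1 -> Prop) (Q : T2 -> Prop) (R : U -> Prop)
  (F : T1 -> T2 -> U) s1 s2 :
  (forall x y, P x -> Q y -> R (F x y)) -> allp P s1 -> allp Q s2 ->
  allp R [seq F x y | x <- s1, y <- s2].
Proof.
move=> h; elim: s1 => //= x s1 IH [Px /IH H1] H2; apply: allp_cat (H1 H2).
by apply: allp_mapP H2 => y; apply: h.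
Qed.

Lemma allp_nth T (P : T -> Prop) (t0 : T) s i : allp P s -> (i < size s)%N -> P (nth t0 s i).
Proof. by elim: s i => //= x s IH [|i] [] // _ /IH h /h. Qed.

Lemma allp_imp T (P Q : T -> Prop) s : (forall x, P x -> Q x) -> allp P s -> allp Q s.
Proof. by move=> h; elim: s => //= x s IH [/h ? /IH]; split. Qed.

Lemma sum_seq_ord (V : zmodType) T (t0 : T) (s : seq T) (G : T -> V) :
  \sum_(t <- s) G t = \sum_(i < size s) G (nth t0 s i).
Proof. by rewrite (big_nth t0) big_mkord. Qed.

Lemma sum_ord_seq (V : zmodType) T m (F : 'I_m -> T) (G : T -> V) :
  \sum_(i < m) G (F i) = \sum_(t <- map F (enum 'I_m)) G t.
Proof. by rewrite big_map big_enum. Qed.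

Lemma msuppU1' (K : fieldType) (X : choiceType) (x y : X) :
  y \in msupp (<< x >> : {malg K[X]}) -> y = x.
Proof. by rewrite -mcoeff_neq0 mcoeffU; case: (eqVneq x y) => [->|] //; rewrite mulr0n eqxx. Qed.

Lemma sum_only (V : zmodType) (I : eqType) (r : seq I) j (F : I -> V) :
  j \in r -> uniq r -> (forall i, i \in r -> i != j -> F i = 0) ->
  \sum_(i <- r) F i = F j.
Proof.
move=> jr ur h; rewrite (big_rem j) //= big1_seq ?addr0 // => i /andP[_ ir].
by move: ir; rewrite mem_rem_uniq // => /andP[ne ir]; apply: h.
Qed.

Section Hopf.
Variables (K : fieldType) (B : choiceType) (H : hopf_data K B).
Hypothesis HH : graded_connected_hopf H.

Local Notation deg := (deg H).
Local Notation eps := (counitb H).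
Local Notation conv := (conv H).

Ltac dH HH := have [A0 [[B1 B2] [[C1 C2 C3 C4] [[D1 D2] [[E1 E2] [[F1 F2 F3 F4] G0]]]]]] := HH.

Lemma fin_deg n : exists s : seq B, forall b, deg b = n -> b \in s.
Proof. by dH HH; apply: A0. Qed.
Lemma deg_unit : deg (unitb H) = 0%N.
Proof. by dH HH. Qed.
Lemma conn b : deg b = 0%N -> b = unitb H.
Proof. by dH HH; apply: B2. Qed.
Lemma deg_mul a b c : c \in msupp (mulb H a b) -> deg c = (deg a + deg b)%N.
Proof. by dH HH; apply: C1. Qed.
Lemma deg_comul b p : p \in msupp (comulb H b) -> (deg p.1 + deg p.2)%N = deg b.
Proof. by dH HH; apply: C2. Qed.
Lemma deg_counit b : eps b != 0 -> deg b = 0%N.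
Proof. by dH HH; apply: C3. Qed.
Lemma deg_antip b c : c \in msupp (antipb H b) -> deg c = deg b.
Proof. by dH HH; apply: C4. Qed.
Lemma hmulA u v w : hmul H (hmul H u v) w = hmul H u (hmul H v w).
Proof. by dH HH; apply: D1. Qed.
Lemma hmul1l v : hmul H (hone H) v = v.
Proof. by dH HH; case: (D2 v). Qed.
Lemma hmul1r v : hmul H v (hone H) = v.
Proof. by dH HH; case: (D2 v). Qed.
Lemma coassoc v : tmap (hcomul H) id (hcomul H v) = assocr3 (tmap id (hcomul H) (hcomul H v)).
Proof. by dH HH; apply: E1. Qed.
Lemma counitL v : counit_l H (hcomul H v) = v.
Proof. by dH HH; case: (E2 v). Qed.
Lemma counitR v : counit_r H (hcomul H v) = v.
Proof. by dH HH; case: (E2 v). Qed.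
Lemma comul_mul u v : hcomul H (hmul H u v) = hmul2 H (hcomul H u) (hcomul H v).
Proof. by dH HH; apply: F1. Qed.
Lemma comul_one : hcomul H (hone H) = tens (hone H) (hone H).
Proof. by dH HH. Qed.
Lemma counit_mul u v : hcounit H (hmul H u v) = hcounit H u * hcounit H v.
Proof. by dH HH; apply: F3. Qed.
Lemma counit_one : hcounit H (hone H) = 1.
Proof. by dH HH. Qed.
Lemma antipL v : hmulT H (tmap (hantip H) id (hcomul H v)) = hcounit H v *: hone H.
Proof. by dH HH; case: (G0 v). Qed.

Lemma ev_hcomul (F : B * B -> K) h :
  ev F (hcomul H h) = ev (fun b => ev F (comulb H b)) h.
Proof. exact: ev_lift. Qed.

Lemma hcomulU b : hcomul H << b >> = comulb H b.
Proof. exact: liftU. Qed.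

Lemma conv_ev f g h : ev (conv f g) h = ev (fun p => f p.1 * g p.2) (hcomul H h).
Proof. by rewrite ev_hcomul. Qed.

Lemma ev_comul2 (F : (B * B) * B -> K) h :
  ev F (comul2 H h) = ev (fun p => ev (fun q => F (q, p.2)) (comulb H p.1)) (hcomul H h).
Proof.
rewrite /comul2 /tmap ev_lift; congr ev; apply: fext => p.
by rewrite ev_tens hcomulU /=; congr ev; apply: fext => q; rewrite evU1.
Qed.

Lemma ev3 a b c h :
  ev (fun t => a t.1.1 * b t.1.2 * c t.2) (comul2 H h) = ev (conv (conv a b) c) h.
Proof.
rewrite ev_comul2 conv_ev; congr ev; apply: fext => p /=.
by rewrite ev_fscale.
Qed.

Lemma conv_assoc a b c : conv (conv a b) c = conv a (conv b c).
Proof.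
apply: fext => x.
have e1 := ev3 a b c << x >>; rewrite evU1 in e1; rewrite -e1 /comul2 coassoc.
rewrite /assocr3 ev_lift /tmap ev_lift hcomulU.
rewrite /(conv a) /Defs.conv; congr ev; apply: fext => p /=.
rewrite ev_tens evU1 /= hcomulU /Defs.conv -ev_fscalel; congr ev; apply: fext => q.
by rewrite evU1 /= mulrA.
Qed.

Lemma conv_epsl f : conv eps f = f.
Proof.
apply: fext => x; have := congr1 (ev f) (counitL << x >>).
rewrite evU1 => <-; rewrite /counit_l ev_lift hcomulU; congr ev.
by apply: fext => p; rewrite evZ evU1.
Qed.

Lemma conv_epsr f : conv f eps = f.
Proof.
apply: fext => x; have := congr1 (ev f) (counitR << x >>).
rewrite evU1 => <-; rewrite /counit_r ev_lift hcomulU; congr ev.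
by apply: fext => p; rewrite evZ evU1 mulrC.
Qed.

Lemma conv_linl a f g k :
  conv (fun b => a * f b + g b) k = (fun b => a * conv f k b + conv g k b).
Proof.
apply: fext => x; rewrite /Defs.conv -ev_flin; congr ev; apply: fext => p.
by rewrite mulrDl mulrA.
Qed.

Lemma conv_linr a f g k :
  conv k (fun b => a * f b + g b) = (fun b => a * conv k f b + conv k g b).
Proof.
apply: fext => x; rewrite /Defs.conv -ev_flin; congr ev; apply: fext => p.
rewrite mulrDr; ring.
Qed.

Lemma conv_scalel a f g : conv (fun b => a * f b) g = (fun b => a * conv f g b).
Proof.
apply: fext => x; rewrite /Defs.conv -ev_fscalel; congr ev; apply: fext => p.
by rewrite mulrA.
Qed.

Lemma conv_scaler a f g : conv g (fun b => a * f b) = (fun b => a * conv g f b).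
Proof.
apply: fext => x; rewrite /Defs.conv -ev_fscalel; congr ev; apply: fext => p.
rewrite /=; ring.
Qed.

Lemma conv_suml I (r : seq I) (F : I -> B -> K) g :
  conv (fun b => \sum_(i <- r) F i b) g = (fun b => \sum_(i <- r) conv (F i) g b).
Proof.
apply: fext => x; rewrite /Defs.conv -ev_fsum; congr ev; apply: fext => p.
by rewrite big_distrl.
Qed.

Lemma conv_sumr I (r : seq I) (F : I -> B -> K) g :
  conv g (fun b => \sum_(i <- r) F i b) = (fun b => \sum_(i <- r) conv g (F i) b).
Proof.
apply: fext => x; rewrite /Defs.conv -ev_fsum; congr ev; apply: fext => p.
by rewrite big_distrr.
Qed.

Lemma conv0l g : conv (fun _ => 0) g = (fun _ => 0).
Proof.
apply: fext => x; rewrite /Defs.conv; transitivity (ev (fun _ => 0) (comulb H x)); last exact: ev_f0.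
by congr ev; apply: fext => p; rewrite /= mul0r.
Qed.

Lemma conv0r g : conv g (fun _ => 0) = (fun _ => 0).
Proof.
apply: fext => x; rewrite /Defs.conv; transitivity (ev (fun _ => 0) (comulb H x)); last exact: ev_f0.
by congr ev; apply: fext => p; rewrite /= mulr0.
Qed.


Lemma bound_supp (X : choiceType) (d : X -> nat) (v : {malg K[X]}) :
  exists N, forall b, b \in msupp v -> (d b < N)%N.
Proof.
exists (\max_(b <- msupp v) (d b).+1) => b bi.
by apply: (@leq_bigmax_seq _ _ xpredT (fun b => (d b).+1)).
Qed.

Lemma fin_lt N : exists L : seq B, uniq L /\ forall b, (b \in L) = (deg b < N)%N.
Proof.
have [s hs] : exists s : seq B, forall b, (deg b < N)%N -> b \in s.
  elim: N => [|N [s hs]]; first by exists [::].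
  have [t ht] := fin_deg N; exists (s ++ t) => b; rewrite ltnS leq_eqVlt mem_cat.
  by case/orP => [/eqP/ht ->|/hs ->]; rewrite ?orbT.
exists (undup (filter (fun b => deg b < N)%N s)); split; first exact: undup_uniq.
move=> b; rewrite mem_undup mem_filter; apply/andP/idP => [[]//|h]; split=> //.
exact: hs.
Qed.

Lemma hcomul_supp h p : p \in msupp (hcomul H h) ->
  exists2 b, b \in msupp h & p \in msupp (comulb H b).
Proof. exact: msupp_lift. Qed.

Lemma hcomul_deg n h p : homog H n h -> p \in msupp (hcomul H h) ->
  (deg p.1 + deg p.2)%N = n.
Proof. by move=> hh /hcomul_supp [b /hh <- /deg_comul]. Qed.

Lemma comul2_deg n h t : homog H n h -> t \in msupp (comul2 H h) ->
  (deg t.1.1 + deg t.1.2 + deg t.2)%N = n.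
Proof.
move=> hh /msupp_lift [p /(hcomul_deg hh) <-]; rewrite /= hcomulU.
by move=> /msupp_tens [/deg_comul <- /msuppU1' ->].
Qed.

Lemma ev_hcomp f n v : ev f (hcomp H n v) = ev (dcomp H n f) v.
Proof.
rewrite /hcomp ev_sum [RHS]/ev big_mkcond /=; apply: eq_bigr => b _.
rewrite /dcomp; case: ifP => _; last by rewrite mulr0.
by rewrite evZ evU1.
Qed.

Lemma ev_homog f n k v : homog H n v ->
  ev (dcomp H k f) v = if n == k then ev f v else 0.
Proof.
move=> hv; case: ifP => e.
  by apply: ev_fext => b /hv; rewrite /dcomp => ->; rewrite e.
rewrite -(ev_f0 v); apply: ev_fext => b /hv; rewrite /dcomp => ->; rewrite e //.
Qed.

Lemma homog_hcomp n v : homog H n (hcomp H n v).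
Proof.
move=> b; rewrite -mcoeff_neq0 -ev_delta ev_hcomp => /ev_neq0 [c _].
rewrite /dcomp /delta; case: (deg c =P n) => [dc|_]; last by rewrite eqxx.
by case: (c =P b) => [<-|_] //; rewrite eqxx.
Qed.

Lemma sum_dcomp N f b : (deg b < N)%N -> \sum_(n < N) dcomp H n f b = f b.
Proof.
move=> lt; rewrite (bigD1 (Ordinal lt)) //= big1 ?addr0; first by rewrite /dcomp eqxx.
by move=> i /eqP ne; rewrite /dcomp; case: eqP => // e; case: ne; apply: val_inj.
Qed.

Lemma hcomp_decomp N v : (forall b, b \in msupp v -> (deg b < N)%N) ->
  v = \sum_(n < N) hcomp H n v.
Proof.
move=> hN; apply: malg_ext => f; rewrite ev_sum.
under eq_bigr do rewrite ev_hcomp.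
by rewrite -ev_fsum; apply: ev_fext => b /hN /sum_dcomp ->.
Qed.

Lemma dcomp_dcomp m k f :
  dcomp H m (dcomp H k f) = if m == k then dcomp H k f else (fun _ => 0).
Proof.
apply: fext => b; case: (eqVneq m k) => [->|ne]; first by rewrite /dcomp; case: ifP => // ->.
rewrite /dcomp; case: (deg b =P m) => // ->; by rewrite (negbTE ne).
Qed.

Lemma dcomp_conv n f g :
  dcomp H n (conv f g) = (fun b => \sum_(i < n.+1) conv (dcomp H i f) (dcomp H (n - i) g) b).
Proof.
apply: fext => b; rewrite /(dcomp H n) /Defs.conv -ev_fsum.
transitivity (ev (fun p => if deg b == n then f p.1 * g p.2 else 0) (comulb H b)).
  by case: ifP => _ //; rewrite ev_f0.
apply: ev_fext => p /deg_comul; case: eqP => [<- <-|ne e].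
  have lt : (deg p.1 < (deg p.1 + deg p.2).+1)%N by rewrite ltnS leq_addr.
  rewrite (bigD1 (Ordinal lt)) //= big1 ?addr0; first by rewrite /dcomp eqxx addKn eqxx.
  move=> i /eqP ni; rewrite /dcomp; case: eqP => [e|]; last by rewrite mul0r.
  by case: ni; apply: val_inj; rewrite /= -e.
rewrite big1 // => i _; rewrite /dcomp; case: eqP => [e1|]; last by rewrite mul0r.
case: eqP => [e2|]; last by rewrite mulr0.
by case: ne; rewrite -e e1 e2 subnKC // -ltnS.
Qed.

Lemma in_dual_ext f g : in_dual H f -> f = g -> in_dual H g.
Proof. by move=> + <-. Qed.

Lemma in_dual_conv f g : in_dual H f -> in_dual H g -> in_dual H (conv f g).
Proof.
move=> [N1 h1] [N2 h2]; exists (N1 + N2)%N => b le.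
rewrite /Defs.conv -(ev_f0 (comulb H b)); apply: ev_fext => p /deg_comul e.
have [l1|l1] := leqP N1 (deg p.1); first by rewrite h1 ?mul0r.
rewrite h2 ?mulr0 //; rewrite -e in le; lia.
Qed.

Lemma in_dual_eps : in_dual H eps.
Proof.
exists 1%N => b le; apply/eqP; apply: contraT => /deg_counit e.
by rewrite e in le.
Qed.

Lemma in_dual_dcomp n f : in_dual H (dcomp H n f).
Proof. by exists n.+1 => b le; rewrite /dcomp; case: eqP => // e; rewrite e ltnn in le. Qed.

Lemma in_dual_delta x : in_dual H (delta K x).
Proof.
exists (deg x).+1 => b le; rewrite /delta; case: eqP => // e.
by rewrite e ltnn in le.
Qed.

Lemma in_dual0 : in_dual H (fun _ => 0).
Proof. by exists 0%N. Qed.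

Lemma in_dual_lin a f g : in_dual H f -> in_dual H g -> in_dual H (fun b => a * f b + g b).
Proof.
move=> [N1 h1] [N2 h2]; exists (N1 + N2)%N => b le.
rewrite h1 ?h2 ?mulr0 ?addr0 //; lia.
Qed.

Lemma in_dual_sum I (r : seq I) (F : I -> B -> K) :
  (forall i, in_dual H (F i)) -> in_dual H (fun b => \sum_(i <- r) F i b).
Proof.
move=> hF; elim: r => [|i r IH].
  by eapply in_dual_ext; first exact: in_dual0; apply: fext => b; rewrite big_nil.
by eapply in_dual_ext; first exact: (in_dual_lin 1 (hF i) IH); apply: fext => b; rewrite big_cons mul1r.
Qed.


Lemma hmulU x y : hmul H << x >> << y >> = mulb H x y.
Proof. by rewrite /hmul !msupp1 !big_seq_fset1 !mcoeffUU mul1r scale1r. Qed.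

Lemma comulb_unit : comulb H (unitb H) = << (unitb H, unitb H) >>.
Proof. by rewrite -hcomulU -/(hone H) comul_one /hone tensU. Qed.

Lemma ev_hmul2 F w w' : ev F (hmul2 H w w') =
  ev (fun p => ev (fun q => ev F (tens (mulb H p.1 q.1) (mulb H p.2 q.2))) w') w.
Proof.
rewrite /hmul2 ev_sum [RHS]/ev; apply: eq_bigr => p _; rewrite ev_sum [in RHS]/ev big_distrr.
by apply: eq_bigr => q _; rewrite evZ /= mulrA.
Qed.

End Hopf.

Section Ideal.
Variables (K : fieldType) (B : choiceType) (H : hopf_data K B).
Hypothesis HH : graded_connected_hopf H.
Variables (phi psi : B -> K).
Hypotheses (Hphi : character H phi) (Hpsi : character H psi).

Local Notation deg := (deg H).
Local Notation eps := (counitb H).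
Local Notation conv := (conv H).
Local Notation dcomp := (dcomp H).
Local Notation in_dual := (in_dual H).

Definition DkF k := dcomp k (fun x => phi x - psi x).
Local Notation Dk := DkF.
Definition ItermF (t : (B -> K) * (B -> K) * nat) := conv (conv t.1.1 (Dk t.2)) t.1.2.
Local Notation Iterm := ItermF.
Definition IS (f : B -> K) := exists s, allp (fun t => in_dual t.1.1 /\ in_dual t.1.2) s /\
  f = (fun b => \sum_(t <- s) Iterm t b).

Lemma IS_Iphipsi f : Iphipsi H phi psi f <-> IS f.
Proof.
split.
  move=> [m [a [c [k [hd e]]]]].
  exists (map (fun i => (a i, c i, k i)) (enum 'I_m)); split.
    by apply: allp_map => i /=; apply: hd.
  apply: fext => b; rewrite e.
  by rewrite (sum_ord_seq (fun i => (a i, c i, k i)) (fun t => Iterm t b)).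
move=> [s [hs ->]].
pose t0 : (B -> K) * (B -> K) * nat := (fun _ => 0, fun _ => 0, 0%N).
exists (size s), (fun i => (nth t0 s i).1.1), (fun i => (nth t0 s i).1.2),
  (fun i => (nth t0 s i).2); split.
  by move=> i; apply: (allp_nth t0 hs (ltn_ord i)).
by move=> b; rewrite (sum_seq_ord t0 s (fun t => Iterm t b)).
Qed.

Lemma IS0 : IS (fun _ => 0).
Proof. by exists [::]; split => //; apply: fext => b; rewrite big_nil. Qed.

Lemma Iterm_scale a t :
  Iterm ((fun b => a * t.1.1 b), t.1.2, t.2) = (fun b => a * Iterm t b).
Proof. by rewrite /ItermF /= !conv_scalel. Qed.

Lemma IS_lin a f g : IS f -> IS g -> IS (fun b => a * f b + g b).
Proof.
move=> [s1 [h1 ->]] [s2 [h2 ->]].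
exists (map (fun t => ((fun b => a * t.1.1 b), t.1.2, t.2)) s1 ++ s2); split.
  apply: allp_cat h2; apply: allp_mapP h1 => t [d1 d2]; split => //.
  by eapply in_dual_ext; first exact: (in_dual_lin a d1 (in_dual0 H)); apply: fext => b; rewrite addr0.
apply: fext => b; rewrite big_cat big_map big_distrr /=; congr (_ + _).
by apply: eq_bigr => t _; rewrite Iterm_scale.
Qed.

Lemma IS_ext f g : IS f -> f = g -> IS g.
Proof. by move=> + <-. Qed.

Lemma IS_sum I (r : seq I) (F : I -> B -> K) :
  (forall i, IS (F i)) -> IS (fun b => \sum_(i <- r) F i b).
Proof.
move=> hF; elim: r => [|i r IH].
  by eapply IS_ext; first exact: IS0; apply: fext => b; rewrite big_nil.
by eapply IS_ext; first exact: (IS_lin 1 (hF i) IH); apply: fext => b; rewrite big_cons mul1r.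
Qed.

Lemma IS_term t : in_dual t.1.1 -> in_dual t.1.2 -> IS (Iterm t).
Proof.
move=> d1 d2; exists [:: t]; split => //.
by apply: fext => b; rewrite big_seq1.
Qed.

Lemma in_dual_Dk k : in_dual (Dk k).
Proof. exact: in_dual_dcomp. Qed.

Lemma IS_in_dual f : IS f -> in_dual f.
Proof.
move=> [s [hs ->]]; elim: s hs => [|t s IH] /= hs.
  by eapply in_dual_ext; first exact: (in_dual0 H); apply: fext => b; rewrite big_nil.
case: hs => [[d1 d2] hs].
have d : in_dual (Iterm t).
  by apply: in_dual_conv => //; apply: in_dual_conv => //; apply: in_dual_Dk.
by eapply in_dual_ext; first exact: (in_dual_lin 1 d (IH hs)); apply: fext => b; rewrite big_cons mul1r.
Qed.

Lemma IS_Dk k : IS (Dk k).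
Proof.
have -> : Dk k = Iterm (eps, eps, k) by rewrite /ItermF /= (conv_epsl HH) (conv_epsr HH).
by apply: IS_term; apply: in_dual_eps.
Qed.

Lemma IS_convr f g : IS f -> in_dual g -> IS (conv f g).
Proof.
move=> [s [hs ->]] dg; rewrite conv_suml.
exists (map (fun t => (t.1.1, conv t.1.2 g, t.2)) s); split.
  by apply: allp_mapP hs => t [d1 d2]; split => //=; apply: in_dual_conv.
apply: fext => b; rewrite big_map; apply: eq_bigr => t _.
by rewrite /ItermF /= (conv_assoc HH).
Qed.

Lemma IS_convl f g : IS f -> in_dual g -> IS (conv g f).
Proof.
move=> [s [hs ->]] dg; rewrite conv_sumr.
exists (map (fun t => (conv g t.1.1, t.1.2, t.2)) s); split.
  by apply: allp_mapP hs => t [d1 d2]; split => //=; apply: in_dual_conv.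
apply: fext => b; rewrite big_map; apply: eq_bigr => t _.
by rewrite /ItermF /= -!(conv_assoc HH).
Qed.

Lemma dcomp_sum n I (r : seq I) (F : I -> B -> K) :
  dcomp n (fun b => \sum_(i <- r) F i b) = (fun b => \sum_(i <- r) dcomp n (F i) b).
Proof.
apply: fext => b; rewrite /Defs.dcomp; case: ifP => // _.
by rewrite big1.
Qed.

Lemma IS_dcomp_term n t : IS (dcomp n (Iterm t)).
Proof.
rewrite /ItermF (dcomp_conv HH); apply: IS_sum => i.
rewrite (dcomp_conv HH) conv_suml; apply: IS_sum => j.
rewrite /DkF dcomp_dcomp; case: ifP => [/eqP e|_].
  by apply: (@IS_term (dcomp j t.1.1, dcomp (n - i) t.1.2, t.2)); apply: in_dual_dcomp.
by rewrite conv0r conv0l; apply: IS0.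
Qed.

Lemma IS_dcomp n f : IS f -> IS (dcomp n f).
Proof.
move=> [s [_ ->]]; rewrite dcomp_sum; apply: IS_sum => t; exact: IS_dcomp_term.
Qed.

End Ideal.

Section Coideal.
Variables (K : fieldType) (B : choiceType) (H : hopf_data K B).
Hypothesis HH : graded_connected_hopf H.
Variables (phi psi : B -> K).
Hypotheses (Hphi : character H phi) (Hpsi : character H psi).

Local Notation deg := (deg H).
Local Notation eps := (counitb H).
Local Notation conv := (conv H).
Local Notation dcomp := (dcomp H).
Local Notation in_dual := (in_dual H).
Local Notation Dk := (DkF H phi psi).
Local Notation Iterm := (ItermF H phi psi).
Local Notation IS := (IS H phi psi).

Lemma char_mul chi : character H chi -> forall x y, ev chi (mulb H x y) = chi x * chi y.
Proof. by move=> [h _] x y; have := h << x >> << y >>; rewrite hmulU !evU1. Qed.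

Lemma char_one chi : character H chi -> chi (unitb H) = 1.
Proof. by move=> [_ h]; move: h; rewrite /hone evU1. Qed.

Lemma conv_unit f g : conv f g (unitb H) = f (unitb H) * g (unitb H).
Proof. by rewrite /Defs.conv (comulb_unit HH) evU1. Qed.

Lemma IS_unit f : IS f -> f (unitb H) = 0.
Proof.
move=> [s [_ ->]]; rewrite big1 // => t _.
rewrite /ItermF !conv_unit /DkF /Defs.dcomp (deg_unit HH).
by rewrite (char_one Hphi) (char_one Hpsi) subrr if_same mulr0 mul0r.
Qed.

Definition decomp (f : B -> K) (s : seq ((B -> K) * (B -> K))) :=
  forall x y, dcomul H f (x, y) = \sum_(q <- s) q.1 x * q.2 y.

Lemma decomp_conv f g s1 s2 : decomp f s1 -> decomp g s2 ->
  decomp (conv f g) [seq (conv q.1 r.1, conv q.2 r.2) | q <- s1, r <- s2].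
Proof.
move=> h1 h2 x y; rewrite /dcomul conv_ev -hmulU (comul_mul HH) !hcomulU ev_hmul2.
rewrite big_allpairs_dep /=.
transitivity (ev (fun p => \sum_(q <- s1) \sum_(r <- s2)
   (q.1 p.1 * r.1 p.2) * ev (fun p' => q.2 p'.1 * r.2 p'.2) (comulb H y)) (comulb H x)).
  congr ev; apply: fext => p /=.
  transitivity (ev (fun p' => \sum_(q <- s1) \sum_(r <- s2)
     (q.1 p.1 * r.1 p.2) * (q.2 p'.1 * r.2 p'.2)) (comulb H y)).
    congr ev; apply: fext => p'; rewrite ev_tens_prod.
    have := h1 p.1 p'.1; have := h2 p.2 p'.2; rewrite /dcomul /= => -> ->.
    rewrite big_distrl /=; apply: eq_bigr => q _; rewrite big_distrr /=.
    by apply: eq_bigr => r _; ring.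
  rewrite ev_fsum; apply: eq_bigr => q _; rewrite ev_fsum; apply: eq_bigr => r _.
  by rewrite ev_fscalel.
rewrite ev_fsum; apply: eq_bigr => q _; rewrite ev_fsum; apply: eq_bigr => r _.
by rewrite ev_fscale.
Qed.


Lemma ev_mul_vanish f N x y : (forall b, (N <= deg b)%N -> f b = 0) ->
  (N <= deg x + deg y)%N -> ev f (mulb H x y) = 0.
Proof.
move=> hN le; rewrite -(ev_f0 (mulb H x y)); apply: ev_fext => b /(deg_mul HH) e.
by apply: hN; rewrite e.
Qed.

Lemma decomp_fin f : in_dual f ->
  exists s, allp (fun q => in_dual q.1 /\ in_dual q.2) s /\ decomp f s.
Proof.
move=> [N hN]; have [L [uL hL]] := fin_lt HH N.
exists (map (fun z => (delta K z, fun y => if (deg z + deg y < N)%N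
                                           then ev f (mulb H z y) else 0)) L).
split.
  apply: allp_map => z; split; first exact: in_dual_delta.
  exists N => b le /=; case: ifP => // lt; exfalso; move: lt le; lia.
move=> x y; rewrite big_map /dcomul /=.
have [xL|xL] := boolP (x \in L).
  rewrite (bigD1_seq x) //= big1 ?addr0.
    rewrite /delta eqxx mul1r; case: ifP => // /negbT; rewrite -leqNgt => le.
    exact: ev_mul_vanish hN le.
  by move=> z /negbTE; rewrite /delta eq_sym => ->; rewrite mul0r.
rewrite big_seq big1 => [|z zL]; last first.
  by rewrite /delta; case: eqP => [e|]; [move: xL; rewrite e zL | rewrite mul0r].
apply: ev_mul_vanish hN _; move: xL; rewrite hL -leqNgt => le.
exact: leq_trans le (leq_addr _ _).
Qed.


Definition sD k := [seq (Dk i, dcomp (k - i) phi) | i <- iota 0 k.+1] ++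
                   [seq (dcomp i psi, Dk (k - i)) | i <- iota 0 k.+1].

Lemma decomp_Dk k : decomp (Dk k) (sD k).
Proof.
move=> x y; rewrite /dcomul /= /DkF.
have hm : homog H (deg x + deg y) (mulb H x y) by move=> b /(deg_mul HH).
rewrite (ev_homog _ _ hm) ev_fsub !char_mul //.
rewrite /sD big_cat !big_map /= -big_split /=.
case: (eqVneq (deg x + deg y) k) => e.
  have xi : deg x \in iota 0 k.+1 by rewrite mem_iota; lia.
  rewrite (sum_only xi) ?iota_uniq //.
    rewrite /Defs.dcomp eqxx -e addKn eqxx /DkF /Defs.dcomp !eqxx; ring.
  by move=> i _ /negbTE ni; rewrite /DkF /Defs.dcomp eq_sym ni !mul0r addr0.
rewrite big1_seq => [//|i /andP[_ ir]].
have le : (i <= k)%N by move: ir; rewrite inE mem_iota; lia.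
rewrite /DkF /Defs.dcomp; case: (deg x =P i) => [ei|_]; last by rewrite !mul0r addr0.
case: (deg y =P (k - i)%N) => [ey|_]; last by rewrite !mulr0 addr0.
by exfalso; move: e; rewrite ei ey; move: le; lia.
Qed.

Definition Pco (q : (B -> K) * (B -> K)) := in_dual q.1 /\ in_dual q.2 /\ (IS q.1 \/ IS q.2).

Lemma Pco_sD k : allp Pco (sD k).
Proof.
apply: allp_cat; apply: allp_map => i; split; try apply: in_dual_dcomp; split;
  try apply: in_dual_dcomp; [left | right]; exact: IS_Dk.
Qed.

Definition CoI f := exists s, allp Pco s /\ decomp f s.

Lemma CoI0 : CoI (fun _ => 0).
Proof.
by exists [::]; split => // x y; rewrite big_nil /dcomul ev_f0.
Qed.

Lemma CoI_add f g : CoI f -> CoI g -> CoI (fun b => f b + g b).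
Proof.
move=> [s1 [h1 d1]] [s2 [h2 d2]]; exists (s1 ++ s2); split; first exact: allp_cat.
by move=> x y; rewrite big_cat -d1 -d2 /dcomul ev_fadd.
Qed.

Lemma CoI_term a c k : in_dual a -> in_dual c -> CoI (Iterm (a, c, k)).
Proof.
move=> da dc; have [sa [ha dea]] := decomp_fin da; have [sc [hc dec]] := decomp_fin dc.
set s1 := [seq (conv q.1 r.1, conv q.2 r.2) | q <- sa, r <- sD k].
exists [seq (conv q.1 r.1, conv q.2 r.2) | q <- s1, r <- sc]; split; last first.
  by apply: decomp_conv => //; apply: decomp_conv => //; apply: decomp_Dk.
apply: (allp_allpairs (P := Pco) (Q := fun q => in_dual q.1 /\ in_dual q.2)) => //.
  move=> q r [dq1 [dq2 hq]] [dr1 dr2] /=; split; first exact: in_dual_conv.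
  split; first exact: in_dual_conv.
  by case: hq => hq; [left; apply: IS_convr | right; apply: IS_convr].
apply: (allp_allpairs (P := fun q => in_dual q.1 /\ in_dual q.2) (Q := Pco)) => //;
  last exact: Pco_sD.
move=> q r [dq1 dq2] [dr1 [dr2 hr]] /=; split; first exact: in_dual_conv.
split; first exact: in_dual_conv.
by case: hr => hr; [left; apply: IS_convl | right; apply: IS_convl].
Qed.

Lemma CoI_IS f : IS f -> CoI f.
Proof.
move=> [s [hs ->]]; elim: s hs => [|t s IH] /= hs.
  have -> : (fun b => \sum_(t <- [::]) Iterm t b) = (fun _ => 0).
    by apply: fext => b; rewrite big_nil.
  exact: CoI0.
case: hs => [[d1 d2] hs].
have -> : (fun b => \sum_(t0 <- t :: s) Iterm t0 b) =
          (fun b => Iterm t b + \sum_(t0 <- s) Iterm t0 b).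
  by apply: fext => b; rewrite big_cons.
apply: CoI_add; last exact: IH.
by case: t d1 d2 => [[a c] k] d1 d2; apply: CoI_term.
Qed.

End Coideal.

Section Basis.
Variables (K : fieldType) (X : choiceType).

Definition subsp (P : {malg K[X]} -> Prop) :=
  P 0 /\ forall a u v, P u -> P v -> P (a *: u + v).

Lemma basis_lemma (L : seq X) (P : {malg K[X]} -> Prop) :
  subsp P -> (forall u, P u -> forall x, x \in msupp u -> x \in L) ->
  exists s : seq ({malg K[X]} * (X -> K)),
    allp (fun e => P e.1) s /\ forall u, P u -> u = \sum_(e <- s) ev e.2 u *: e.1.
Proof.
elim: L P => [|x0 L IH] P [P0 Pl] hL.
  exists [::]; split => // u Pu; rewrite big_nil; apply/malgP => x.
  by rewrite mcoeff0; apply: mcoeff_outdom; apply/negP => /(hL _ Pu).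
have [[u0 [Pu0 nz]]|none] := classic (exists u0, P u0 /\ u0@_x0 != 0); last first.
  apply: IH => // u Pu x xu; have := hL _ Pu _ xu; rewrite inE; case/orP => // /eqP ex.
  subst x; exfalso; apply: none; exists u; split => //; by rewrite mcoeff_neq0.
pose P' u := P u /\ u@_x0 = 0.
have sP' : subsp P'.
  split; first by split => //; rewrite mcoeff0.
  move=> a u v [Pu hu] [Pv hv]; split; first exact: Pl.
  by rewrite mcoeffD mcoeffZ hu hv mulr0 addr0.
have hL' : forall u, P' u -> forall x, x \in msupp u -> x \in L.
  move=> u [Pu hu] x xu; have := hL _ Pu _ xu; rewrite inE; case/orP => // /eqP ex.
  by subst x; rewrite -mcoeff_neq0 hu eqxx in xu.
have [s' [hs' es']] := IH P' sP' hL'.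
pose c : X -> K := fun b => delta K x0 b * (u0@_x0)^-1.
have evc u : ev c u = u@_x0 * (u0@_x0)^-1 by rewrite ev_fscale ev_delta.
exists ((u0, c) :: map (fun e => (e.1, fun b => e.2 b - c b * ev e.2 u0)) s'); split.
  split => //; apply: allp_mapP hs' => e [] //.
move=> u Pu; rewrite big_cons big_map /=.
have Pw : P' (- ev c u *: u0 + u).
  split; first exact: Pl.
  by rewrite mcoeffD mcoeffZ evc mulNr -mulrA mulVf // mulr1 addNr.
have := es' _ Pw => ew.
transitivity (ev c u *: u0 + (- ev c u *: u0 + u)); first by rewrite scaleNr addNKr.
congr (_ + _); rewrite {1}ew; apply: eq_bigr => e _; congr (_ *: _).
rewrite ev_fsub ev_fscale ev_lin; ring.
Qed.

End Basis.

Section Annih.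
Variables (K : fieldType) (B : choiceType) (H : hopf_data K B).
Hypothesis HH : graded_connected_hopf H.
Variables (phi psi : B -> K).
Hypotheses (Hphi : character H phi) (Hpsi : character H psi).

Local Notation deg := (deg H).
Local Notation eps := (counitb H).
Local Notation conv := (conv H).
Local Notation dcomp := (dcomp H).
Local Notation in_dual := (in_dual H).
Local Notation Dk := (DkF H phi psi).
Local Notation Iterm := (ItermF H phi psi).
Local Notation IS := (IS H phi psi).

Lemma sum_allp0 (T : Type) (P : T -> Prop) (s : seq T) (F : T -> K) :
  allp P s -> (forall q, P q -> F q = 0) -> \sum_(q <- s) F q = 0.
Proof. by move=> + h; elim: s => [|q s IH] /= => [_|[/h hq /IH hs]]; rewrite ?big_nil ?big_cons ?hq ?hs ?addr0. Qed.

Definition V (h : {malg K[B]}) := forall f, IS f -> ev f h = 0.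

Lemma V_subsp : subsp V.
Proof.
split; first by move=> f _; rewrite ev0.
by move=> a u v Vu Vv f If; rewrite ev_lin Vu // Vv // mulr0 addr0.
Qed.

Lemma V_hcomp n h : V h -> V (hcomp H n h).
Proof. by move=> Vh f If; rewrite ev_hcomp; apply: Vh; apply: IS_dcomp. Qed.

Lemma V_phipsi h : V h -> ev phi h = ev psi h.
Proof.
move=> Vh; apply/eqP; rewrite -subr_eq0 -ev_fsub.
have [N hN] := bound_supp (deg) h.
rewrite (@ev_fext _ _ _ (fun b => \sum_(n < N) Dk n b)); last first.
  by move=> b /hN lt; rewrite sum_dcomp.
rewrite ev_fsum big1 // => n _; apply: Vh; exact: IS_Dk.
Qed.

Lemma V_hone : V (hone H).
Proof. by move=> f If; rewrite /hone evU1; exact: (IS_unit HH Hphi Hpsi If). Qed.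

Lemma ev_hmul f u v :
  ev f (hmul H u v) = ev (fun a => ev (fun b => dcomul H f (a, b)) v) u.
Proof.
rewrite /hmul ev_sum [RHS]/ev; apply: eq_bigr => a _; rewrite ev_sum [in RHS]/ev big_distrr.
by apply: eq_bigr => b _; rewrite evZ /dcomul /= mulrA.
Qed.

Lemma V_mul u v : V u -> V v -> V (hmul H u v).
Proof.
move=> Vu Vv f If; have [s [hs ds]] := CoI_IS HH Hphi Hpsi If.
rewrite ev_hmul.
transitivity (ev (fun a => \sum_(q <- s) q.1 a * ev q.2 v) u).
  congr ev; apply: fext => a.
  transitivity (ev (fun b => \sum_(q <- s) q.1 a * q.2 b) v).
    by congr ev; apply: fext => b; rewrite ds.
  by rewrite ev_fsum; apply: eq_bigr => q _; rewrite ev_fscalel.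
rewrite ev_fsum; apply: (@sum_allp0 _ _ s (fun q => ev (fun a => q.1 a * ev q.2 v) u) hs) => q [_ [_ [hq|hq]]].
  by rewrite ev_fscale Vu // mul0r.
by rewrite ev_fscale Vv // mulr0.
Qed.


Lemma delta_pair (x y : B) (p : B * B) :
  delta K (x, y) p = delta K x p.1 * delta K y p.2.
Proof.
case: p => a b; rewrite /delta /= xpair_eqE.
by case: (a == x); case: (b == y); rewrite /= ?mul1r ?mul0r.
Qed.

Lemma V_comul h : V h -> in_tens V V (hcomul H h).
Proof.
move=> Vh; set w := hcomul H h.
have [N hN] := bound_supp (fun p : B * B => deg p.1) w.
have [L [uL hL]] := fin_lt HH N.
pose P u := V u /\ forall x, x \in msupp u -> (deg x < N)%N.
have sP : subsp P.
  split; first by split; [exact: V_subsp.1 | move=> x; rewrite msupp0 inE].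
  move=> a u v [Vu su] [Vv sv]; split; first by apply: V_subsp.2.
  move=> x /(fsubsetP (msuppD_le _ _)); rewrite inE => /orP [/(fsubsetP (msuppZ_le _ _)) /su | /sv] //.
have hPL : forall u, P u -> forall x, x \in msupp u -> x \in L.
  by move=> u [_ su] x /su; rewrite hL.
have [s [hs es]] := basis_lemma sP hPL.
pose col y := dlift (fun p => delta K y p.2 *: << p.1 >>) w.
pose ls (g : B -> K) := dlift (fun p => g p.1 *: << p.2 >>) w.
have ev_col f y : ev f (col y) = ev (fun p => f p.1 * delta K y p.2) w.
  by rewrite ev_lift; congr ev; apply: fext => p; rewrite evZ evU1 mulrC.
have ev_ls f g : ev f (ls g) = ev (fun p => g p.1 * f p.2) w.
  by rewrite ev_lift; congr ev; apply: fext => p; rewrite evZ evU1.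
have Pcol y : P (col y).
  split.
    move=> f If; rewrite ev_col -conv_ev; apply: Vh; apply: IS_convr => //.
    exact: in_dual_delta.
  move=> x /msupp_lift [p pw] /(fsubsetP (msuppZ_le _ _)) /msuppU1' ->.
  exact: hN.
have Vls g : V (ls g).
  move=> f If; rewrite ev_ls.
  pose g' b := if (deg b < N)%N then g b else 0.
  rewrite (@ev_fext _ _ _ (fun p => g' p.1 * f p.2)); last first.
    by move=> p /hN lt; rewrite /g' lt.
  rewrite -conv_ev; apply: Vh; apply: IS_convl => //.
  by exists N => b le; rewrite /g' ltnNge le.
have ew : w = \sum_(e <- s) tens e.1 (ls e.2).
  apply/malgP => -[x y]; rewrite [RHS]raddf_sum /=.
  under eq_bigr do rewrite mcoeff_tens.
  transitivity ((col y)@_x).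
    rewrite -!ev_delta ev_col; congr ev; apply: fext => p; exact: delta_pair.
  rewrite {1}(es _ (Pcol y)) raddf_sum; apply: eq_bigr => e _.
  rewrite /= mcoeffZ mulrC; congr (_ * _).
  by rewrite -ev_delta ev_ls ev_col.
exists (size s), (fun i => (nth (0, fun _ => 0) s i).1),
  (fun i => ls (nth (0, fun _ => 0) s i).2); split.
  by move=> i; split; [exact: (allp_nth _ hs (ltn_ord i)).1 | exact: Vls].
by rewrite ew (sum_seq_ord (0, fun _ => 0)).
Qed.


Lemma C_V C : graded_subspace H C -> subcoalgebra H C ->
  (forall x, C x -> ev phi x = ev psi x) -> forall h, C h -> V h.
Proof.
move=> [_ Cg] [_ Cc] Ceq.
have D0 k d : C d -> ev (Dk k) d = 0.
  by move=> Cd; rewrite -ev_hcomp ev_fsub Ceq ?subrr //; apply: Cg.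
have T0 a k u : C u -> ev (conv a (Dk k)) u = 0.
  move=> Cu; rewrite conv_ev; have [m [c [d [hcd ->]]]] := Cc u Cu.
  rewrite ev_sum big1 // => i _; rewrite ev_tens_prod D0 ?mulr0 //.
  by case: (hcd i).
move=> h Ch f [s [_ ->]]; rewrite ev_fsum big1 // => t _.
rewrite /ItermF conv_ev; have [m [c [d [hcd ->]]]] := Cc h Ch.
rewrite ev_sum big1 // => i _; rewrite ev_tens_prod T0 ?mul0r //.
by case: (hcd i).
Qed.

Lemma Sphipsi_V h : Sphipsi H phi psi h <-> V h.
Proof.
split; first by move=> [C [gs sc eq Ch]]; apply: (C_V gs sc eq).
move=> Vh; exists V; split => //.
- split; first exact: V_subsp.
  by move=> n v; apply: V_hcomp.
- split; first exact: V_subsp.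
  exact: V_comul.
- exact: V_phipsi.
Qed.

End Annih.

Lemma sum_bi (K : fieldType) (dx dy n : nat) (a : K) :
  \sum_(j < n.+1) (if dx == j then (if dy == (n - j)%N then a else 0) else 0) =
  if (dx + dy == n)%N then a else 0.
Proof.
case: (ltnP dx n.+1) => [lt|ge].
  rewrite (bigD1 (Ordinal lt)) //= eqxx big1 ?addr0.
    by case: (dy =P (n - dx)%N) => [->|ne]; case: eqP => // e; [move: e|case: ne]; lia.
  move=> j /eqP nj; case: eqP => // e; case: nj; apply: val_inj => /=; by rewrite e.
rewrite big1; last by move=> j _; case: eqP => // e; have := ltn_ord j; rewrite -e; lia.
by case: eqP => // e; move: ge; lia.
Qed.

Section Hopf2.
Variables (K : fieldType) (B : choiceType) (H : hopf_data K B).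
Hypothesis HH : graded_connected_hopf H.
Local Notation deg := (deg H).
Local Notation eps := (counitb H).

Lemma hmulT_tens u v : hmulT H (tmap (hantip H) id (tens u v)) = hmul H (hantip H u) v.
Proof.
apply: malg_ext => f; rewrite /hmulT ev_lift /tmap ev_lift ev_tens ev_hmul /hantip ev_lift.
congr ev; apply: fext => a; rewrite ev_swap; congr ev; apply: fext => b.
rewrite ev_tens liftU /=; congr ev; apply: fext => x; by rewrite evU1.
Qed.

Lemma counit_r_tens c d : counit_r H (tens c d) = ev eps d *: c.
Proof.
apply: malg_ext => f; rewrite /counit_r ev_lift evZ ev_tens -ev_fscalel; congr ev.
by apply: fext => x; rewrite -ev_fscale; congr ev; apply: fext => y; rewrite evZ evU1.
Qed.

Lemma hmul_lin2 u a v w : hmul H u (a *: v + w) = a *: hmul H u v + hmul H u w.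
Proof.
apply: malg_ext => f; rewrite ev_lin !ev_hmul -ev_flin; congr ev; apply: fext => x.
by rewrite ev_lin.
Qed.

Lemma hmul0r u : hmul H u 0 = 0.
Proof.
apply: malg_ext => f; rewrite ev_hmul ev0; transitivity (ev (fun _ => 0) u).
  by congr ev; apply: fext => x; rewrite ev0.
by rewrite ev_f0.
Qed.

Lemma hmul_scale_one u a : hmul H u (a *: hone H) = a *: u.
Proof. by have := hmul_lin2 u a (hone H) 0; rewrite !addr0 hmul0r addr0 (hmul1r HH). Qed.

Definition proj n (w : {malg K[(B * B)%type]}) :=
  dlift (fun p : B * B => if (deg p.1 + deg p.2 == n)%N then << p >> else 0) w.

Lemma ev_proj F n w :
  ev F (proj n w) = ev (fun p => if (deg p.1 + deg p.2 == n)%N then F p else 0) w.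
Proof. by rewrite ev_lift; congr ev; apply: fext => p; case: ifP; rewrite ?evU1 ?ev0. Qed.

Lemma proj_tens n c d :
  proj n (tens c d) = \sum_(j < n.+1) tens (hcomp H j c) (hcomp H (n - j) d).
Proof.
apply: malg_ext => F; rewrite ev_proj ev_tens ev_sum.
under eq_bigr do rewrite ev_tens ev_hcomp.
rewrite -ev_fsum; congr ev; apply: fext => x.
transitivity (ev (fun y => \sum_(j < n.+1) (if deg x == j then
   (if deg y == (n - j)%N then F (x, y) else 0) else 0)) d).
  by congr ev; apply: fext => y; rewrite sum_bi.
rewrite ev_fsum; apply: eq_bigr => j _; rewrite /Defs.dcomp; case: ifP => _.
  by rewrite ev_hcomp.
by rewrite ev_f0.
Qed.


Lemma proj_homog n h : homog H n h -> proj n (hcomul H h) = hcomul H h.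
Proof.
move=> hh; apply: malg_ext => F; rewrite ev_proj; apply: ev_fext => p pi.
by rewrite (hcomul_deg HH hh pi) eqxx.
Qed.

Lemma eps_unit : eps (unitb H) = 1.
Proof. by have := counit_one HH; rewrite /hcounit /hone evU1. Qed.

Lemma hcomp0 v : hcomp H 0 v = ev eps (hcomp H 0 v) *: hone H.
Proof.
apply: malg_ext => f; rewrite evZ /hone evU1 !ev_hcomp -ev_fscale; apply: ev_fext => b _.
rewrite /Defs.dcomp; case: (deg b =P 0%N) => [e|_]; last by rewrite mul0r.
by rewrite (conn HH e) eps_unit mul1r.
Qed.

Lemma eps_hcomp m v : m != 0%N -> ev eps (hcomp H m v) = 0.
Proof.
move=> nm; rewrite ev_hcomp -(ev_f0 v); apply: ev_fext => b _; rewrite /Defs.dcomp.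
case: eqP => // e; apply/eqP; apply: contraT => /(deg_counit HH); rewrite e => e0.
by rewrite e0 in nm.
Qed.


Lemma lift_scale (X Y : choiceType) (g : X -> {malg K[Y]}) a u :
  dlift g (a *: u) = a *: dlift g u.
Proof. by apply: malg_ext => f; rewrite ev_lift !evZ ev_lift. Qed.

Lemma hmulT_tmap_sum I (r : seq I) (F : I -> {malg K[(B * B)%type]}) :
  hmulT H (tmap (hantip H) id (\sum_(i <- r) F i)) =
  \sum_(i <- r) hmulT H (tmap (hantip H) id (F i)).
Proof. by rewrite /tmap lift_sum /hmulT lift_sum. Qed.

Lemma counit_r_sum I (r : seq I) (F : I -> {malg K[(B * B)%type]}) :
  counit_r H (\sum_(i <- r) F i) = \sum_(i <- r) counit_r H (F i).
Proof. by rewrite /counit_r lift_sum. Qed.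

Lemma proj_sum n I (r : seq I) (F : I -> {malg K[(B * B)%type]}) :
  proj n (\sum_(i <- r) F i) = \sum_(i <- r) proj n (F i).
Proof. by rewrite /proj lift_sum. Qed.

End Hopf2.

Section Antip.
Variables (K : fieldType) (B : choiceType) (H : hopf_data K B).
Hypothesis HH : graded_connected_hopf H.
Variables (phi psi : B -> K).
Hypotheses (Hphi : character H phi) (Hpsi : character H psi).
Local Notation deg := (deg H).
Local Notation eps := (counitb H).
Local Notation V := (V H phi psi).

Lemma V_add u v : V u -> V v -> V (u + v).
Proof. by move=> Vu Vv; have := (V_subsp H phi psi).2 1 u v Vu Vv; rewrite scale1r. Qed.

Lemma V_scale a u : V u -> V (a *: u).
Proof.
by move=> Vu; have := (V_subsp H phi psi).2 a u 0 Vu (V_subsp H phi psi).1; rewrite addr0.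
Qed.

Lemma V_sub u v : V u -> V v -> V (u - v).
Proof. by move=> Vu Vv; apply: V_add => //; rewrite -scaleN1r; apply: V_scale. Qed.

Lemma V_sum I (r : seq I) (F : I -> {malg K[B]}) :
  (forall i, V (F i)) -> V (\sum_(i <- r) F i).
Proof.
move=> hF; elim: r => [|i r IH]; first by rewrite big_nil; exact: (V_subsp H phi psi).1.
by rewrite big_cons; apply: V_add.
Qed.

Lemma V_antip_homog n h : homog H n h -> V h -> V (hantip H h).
Proof.
elim/ltn_ind: n h => n IH h hh Vh.
have [m [c [d [hcd e]]]] := V_comul HH Vh.
pose cc (i : 'I_m) (j : nat) := hcomp H j (c i).
pose dd (i : 'I_m) (j : nat) := hcomp H (n - j) (d i).
have e2 : hcomul H h = \sum_(i < m) \sum_(j < n.+1) tens (cc i j) (dd i j).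
  rewrite -(proj_homog HH hh) e proj_sum; apply: eq_bigr => i _.
  by rewrite proj_tens.
have A : hcounit H h *: hone H =
   \sum_(i < m) \sum_(j < n.+1) hmul H (hantip H (cc i j)) (dd i j).
  rewrite -(antipL HH) e2 hmulT_tmap_sum; apply: eq_bigr => i _.
  by rewrite hmulT_tmap_sum; apply: eq_bigr => j _; rewrite hmulT_tens.
have Bh : h = \sum_(i < m) ev eps (dd i n) *: cc i n.
  rewrite -{1}(counitR HH h) e2 counit_r_sum; apply: eq_bigr => i _.
  rewrite counit_r_sum big_ord_recr /= big1 ?add0r; first by rewrite counit_r_tens.
  move=> j _; rewrite counit_r_tens /dd eps_hcomp ?scale0r //.
  by rewrite subn_eq0 -ltnNge.
have Cn : \sum_(i < m) hmul H (hantip H (cc i n)) (dd i n) = hantip H h.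
  rewrite [in RHS]Bh /hantip lift_sum; apply: eq_bigr => i _.
  have hd : dd i n = ev eps (dd i n) *: hone H by rewrite /dd subnn; apply: hcomp0.
  by rewrite [in LHS]hd (hmul_scale_one HH); apply/esym; apply: lift_scale.
have Sh : hantip H h = hcounit H h *: hone H -
   \sum_(i < m) \sum_(j < n) hmul H (hantip H (cc i j)) (dd i j).
  rewrite A; under eq_bigr do rewrite big_ord_recr /=.
  by rewrite big_split /= Cn addrC addrK.
rewrite Sh; apply: V_sub; first by apply: V_scale; apply: V_hone.
apply: V_sum => i; apply: V_sum => j; apply: V_mul => //.
  apply: (IH j (ltn_ord j)); first exact: homog_hcomp.
  by apply: V_hcomp; case: (hcd i).
by apply: V_hcomp; case: (hcd i).
Qed.

Lemma V_antip h : V h -> V (hantip H h).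
Proof.
move=> Vh; have [N hN] := bound_supp deg h.
rewrite (hcomp_decomp hN) /hantip lift_sum; apply: V_sum => n.
apply: (V_antip_homog (n := n)); first exact: homog_hcomp.
exact: V_hcomp.
Qed.

End Antip.

Lemma subsp_sum (K : fieldType) (X : choiceType) (P : {malg K[X]} -> Prop)
  (s : seq ({malg K[X]} * (X -> K))) (k : {malg K[X]} * (X -> K) -> K) :
  subsp P -> allp (fun e => P e.1) s -> P (\sum_(e <- s) k e *: e.1).
Proof.
move=> [P0 Pl]; elim: s => [|e s IH] /=; first by rewrite big_nil.
by move=> [Pe /IH Ps]; rewrite big_cons; apply: Pl.
Qed.



Section Final.
Variables (K : fieldType) (B : choiceType) (H : hopf_data K B).
Hypothesis HH : graded_connected_hopf H.
Variables (phi psi : B -> K).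
Hypotheses (Hphi : character H phi) (Hpsi : character H psi).
Local Notation deg := (deg H).
Local Notation eps := (counitb H).
Local Notation conv := (conv H).
Local Notation dcomp := (dcomp H).
Local Notation in_dual := (in_dual H).
Local Notation Dk := (DkF H phi psi).
Local Notation Iterm := (ItermF H phi psi).
Local Notation IS := (IS H phi psi).
Local Notation V := (V H phi psi).

Section Hat.
Variable L : seq B.
Hypothesis uL : uniq L.
Definition hat (g : B -> K) : {malg K[B]} := \sum_(y <- L) g y *: << y >>.

Lemma ev_hat a g : ev a (hat g) = \sum_(y <- L) g y * a y.
Proof. by rewrite /hat ev_sum; apply: eq_bigr => y _; rewrite evZ evU1. Qed.

Lemma hat_coef g x : x \in L -> (hat g)@_x = g x.
Proof.
move=> xL; rewrite -ev_delta ev_hat (sum_only xL uL) /delta ?eqxx ?mulr1 //.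
by move=> y _ /negbTE ->; rewrite mulr0.
Qed.

Lemma hat_supp g x : x \in msupp (hat g) -> x \in L.
Proof.
rewrite -mcoeff_neq0 -ev_delta ev_hat => nz; apply: contraT => xL; move: nz.
rewrite big_seq big1 ?eqxx // => y yL; rewrite /delta; case: eqP => [e|]; last by rewrite mulr0.
by move: xL; rewrite -e yL.
Qed.

Lemma hat_lin a g1 g2 : hat (fun b => a * g1 b + g2 b) = a *: hat g1 + hat g2.
Proof.
rewrite /hat scaler_sumr -big_split; apply: eq_bigr => y _.
by rewrite scalerDl scalerA.
Qed.

Lemma hat0 : hat (fun _ => 0) = 0.
Proof. by rewrite /hat big1 // => y _; rewrite scale0r. Qed.
End Hat.


Lemma dual_annih_n n f : (forall h, V h -> ev f h = 0) -> IS (dcomp n f).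
Proof.
move=> kf.
have [s0 hs0] := fin_deg HH n.
pose L := undup (filter (fun b => deg b == n) s0).
have uL : uniq L := undup_uniq _.
have hL b : (b \in L) = (deg b == n).
  rewrite mem_undup mem_filter; case: eqP => //= e; by rewrite hs0.
pose P u := exists g', IS g' /\ u = hat L g'.
have sP : subsp P.
  split; first by exists (fun _ => 0); split; [exact: IS0 | rewrite hat0].
  move=> a u v [g1 [I1 ->]] [g2 [I2 ->]]; exists (fun b => a * g1 b + g2 b).
  by split; [exact: IS_lin | rewrite hat_lin].
have hPL : forall u, P u -> forall x, x \in msupp u -> x \in L.
  by move=> u [g' [_ ->]]; apply: hat_supp.
have [s [hs es]] := basis_lemma sP hPL.
pose g := dcomp n f.
suff [g' [Ig' eg]] : P (hat L g).
  have eg' : g = dcomp n g'.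
    apply: fext => b; rewrite /g /Defs.dcomp; case: ifP => // e.
    have bL : b \in L by rewrite hL.
    by have := congr1 (mcoeff b) eg; rewrite !hat_coef // /g /Defs.dcomp e.
  by rewrite -/g eg'; exact: IS_dcomp.
apply: NNPP => nP.
pose r := hat L g - \sum_(e <- s) ev e.2 (hat L g) *: e.1.
have rnz : r != 0.
  apply/eqP => r0; apply: nP.
  have -> : hat L g = \sum_(e <- s) ev e.2 (hat L g) *: e.1.
    by apply/eqP; rewrite -subr_eq0 -/r r0.
  exact: subsp_sum.
have [x rx] : exists x, r@_x != 0.
  apply: NNPP => hn; apply: (negP rnz); apply/eqP/malgP => x; rewrite mcoeff0.
  by apply: NNPP => h; apply: hn; exists x; apply/eqP.
pose rho b := delta K x b - \sum_(e <- s) e.2 b * e.1@_x.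
have ev_rho u : ev rho u = (u - \sum_(e <- s) ev e.2 u *: e.1)@_x.
  rewrite ev_fsub ev_delta ev_fsum mcoeffB; congr (_ - _); rewrite raddf_sum.
  by apply: eq_bigr => e _; rewrite ev_fscale /= mcoeffZ.
have rhoP u : P u -> ev rho u = 0.
  by move=> Pu; rewrite ev_rho -(es u Pu) subrr mcoeff0.
pose h := hat L rho.
have Vh : V h.
  move=> g' Ig'; rewrite /h ev_hat.
  transitivity (ev rho (hat L g')).
    by rewrite ev_hat; apply: eq_bigr => y _; rewrite mulrC.
  by apply: rhoP; exists g'.
have hg : ev g h = 0 by rewrite /g -ev_hcomp; apply: kf; apply: V_hcomp.
have sw : ev rho (hat L g) = ev g h.
  by rewrite /h !ev_hat; apply: eq_bigr => y _; rewrite mulrC.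
by move: rx; rewrite -ev_rho sw hg eqxx.
Qed.

Lemma dual_annih f : in_dual f -> (forall h, V h -> ev f h = 0) -> IS f.
Proof.
move=> [N hN] kf.
have -> : f = (fun b => \sum_(n < N) dcomp n f b).
  apply: fext => b; case: (ltnP (deg b) N) => [lt|ge]; first by rewrite sum_dcomp.
  rewrite hN // big1 // => i _; rewrite /Defs.dcomp; case: ifP => // _; exact: hN.
by apply: IS_sum => n; apply: dual_annih_n.
Qed.

Lemma IS_dantip f : IS f -> IS (dantip H f).
Proof.
move=> If; apply: dual_annih.
  have [N hN] := IS_in_dual HH If.
  exists N => b le; rewrite /dantip -(ev_f0 (antipb H b)); apply: ev_fext => c /(deg_antip HH) e.
  by apply: hN; rewrite e.
move=> h Vh; rewrite /dantip -ev_lift -/(hantip H h).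
exact: (V_antip HH Hphi Hpsi Vh If).
Qed.


Lemma ev_mid (chi : B -> K) (G : B * B -> K) w : ev G (mid_map chi w) = ev (fun t => chi t.1.2 * G (t.1.1, t.2)) w.
Proof. by rewrite ev_lift; congr ev; apply: fext => t; rewrite evZ evU1. Qed.

Lemma d_part n h : homog H n h ->
  (V h <-> mid_map (fun b => phi b - psi b) (comul2 H h) = 0).
Proof.
move=> hh; split.
  move=> Vh; apply/malgP => -[x z]; rewrite mcoeff0 -ev_delta ev_mid.
  pose k := (n - deg x - deg z)%N.
  transitivity (ev (fun t => delta K x t.1.1 * Dk k t.1.2 * delta K z t.2) (comul2 H h)).
    apply: ev_fext => t /(comul2_deg HH hh) e; rewrite delta_pair /= /delta.
    case: (t.1.1 =P x) => [ex|_]; last by rewrite !mul0r mulr0.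
    case: (t.2 =P z) => [ez|_]; last by rewrite !mulr0.
    rewrite /DkF /Defs.dcomp; case: eqP => [_|ne]; first by rewrite !mulr1 mul1r.
    by exfalso; apply: ne; rewrite /k -e ex ez -subnDA addnAC addKn.
  rewrite (ev3 H (delta K x) (Dk k) (delta K z)); apply: Vh.
  have It := @IS_term _ _ _ phi psi (delta K x, delta K z, k) (in_dual_delta H x) (in_dual_delta H z).
  exact: It.
move=> m0 f [s [_ ->]]; rewrite ev_fsum big1 // => t _.
rewrite /ItermF -(ev3 H t.1.1 (Dk t.2) t.1.2).
pose G (p : B * B) := if (deg p.1 + t.2 + deg p.2 == n)%N then t.1.1 p.1 * t.1.2 p.2 else 0.
transitivity (ev (fun t' => (fun b => phi b - psi b) t'.1.2 * G (t'.1.1, t'.2)) (comul2 H h)).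
  apply: ev_fext => t' /(comul2_deg HH hh) e; rewrite /G /DkF /Defs.dcomp /=.
  case: (deg t'.1.2 =P t.2) => [e1|ne1].
    have -> : (deg t'.1.1 + t.2 + deg t'.2 == n)%N by rewrite -e1 e.
    by rewrite mulrAC mulrC mulrA.
  have -> : (deg t'.1.1 + t.2 + deg t'.2 == n)%N = false.
    apply/negbTE/eqP => e2; apply: ne1; apply/eqP.
    by rewrite -(eqn_add2l (deg t'.1.1)) -(eqn_add2r (deg t'.2)) e e2.
  by rewrite !mulr0 mul0r.
by rewrite -(ev_mid (fun b => phi b - psi b) G) m0 ev0.
Qed.

End Final.

Local Close Scope fset_scope.
Unset Implicit Arguments.
Local Open Scope ring_scope.

Theorem theorem5p3 (K : fieldType) (B : choiceType) (H : hopf_data K B)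
  (HH : graded_connected_hopf H) (phi psi : B -> K)
  (Hphi : character H phi) (Hpsi : character H psi) :
  [/\ (* (a) *)
      (forall h, Sphipsi H phi psi h <->
                 (forall f, Iphipsi H phi psi f -> ev f h = 0)),
      (* (b) *)
      graded_hopf_ideal H (Iphipsi H phi psi),
      (* (c) *)
      graded_hopf_subalgebra H (Sphipsi H phi psi) &
      (* (d) *)
      forall h, (exists n, homog H n h) ->
        (Sphipsi H phi psi h <->
         mid_map (fun b => phi b - psi b) (comul2 H h) = 0)].
Proof.
have ES : Sphipsi H phi psi = V H phi psi.
  apply: functional_extensionality => h; apply: propositional_extensionality.
  exact: (Sphipsi_V HH phi psi h).
have EI : Iphipsi H phi psi = IS H phi psi.
  apply: functional_extensionality => f; apply: propositional_extensionality.
  exact: IS_Iphipsi.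
rewrite ES EI; split.
- by move=> h.
- split; first by move=> f If; apply: (IS_in_dual HH If).
  split; first by split; [exact: (IS0 H phi psi) | move=> a f g If Ig; apply: IS_lin].
  split; first by move=> f g dg If; split; [apply: (IS_convr HH) | apply: (IS_convl HH)].
  split; first by move=> n f If; apply: (IS_dcomp HH).
  split.
    move=> f If; have [s [hs ds]] := CoI_IS HH Hphi Hpsi If.
    pose q0 : (B -> K) * (B -> K) := (fun _ => 0, fun _ => 0).
    exists (size s), (fun i => (nth q0 s i).1), (fun i => (nth q0 s i).2); split.
      by move=> i; have [d1 [d2 hI]] := allp_nth q0 hs (ltn_ord i); split.
    by move=> [x y]; rewrite ds (sum_seq_ord q0).
  split; first by move=> f If; apply: (IS_unit HH Hphi Hpsi If).
  by move=> f If; apply: (IS_dantip HH Hphi Hpsi If).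
- split.
  + by split; [exact: (V_subsp H phi psi) | move=> n v; apply: (V_hcomp HH)].
  + exact: (V_hone HH Hphi Hpsi).
  + by move=> u v; apply: (V_mul HH Hphi Hpsi).
  + by split; [exact: (V_subsp H phi psi) | move=> v; apply: (V_comul HH)].
  + by move=> v; apply: (V_antip HH Hphi Hpsi).
- by move=> h [n hn]; apply: (d_part HH phi psi hn).
Qed.
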